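(* Let $H$ be a finite group, $N \trianglelefteq H$, and $\pi : H \to H/N$ the projection. Let $M_1, \dots, M_k$ be maximal subgroups of $H$ in general position such that $\{M_1 \cap N, \dots, M_l \cap N\}$ is in general position and $M_j \supseteq \bigcap_{1 \leq i \leq l} (M_i \cap N)$ for every $j > l$. Let $R = \bigcap_{1 \leq i \leq l} M_i$. Then $l \leq \mathrm{MaxDim}(H) - \mathrm{MaxDim}(H/N, \pi(R))$. Moreover, if $N/\Phi(N)$ is abelian, then $l \leq \mathrm{MaxDim}(H) - \mathrm{MaxDim}(H/N)$ and $l \leq \mathrm{MaxDim}_H(N)$, where $H$ acts on $N$ by conjugation.
   Context: All groups are finite. A finite set $\{H_1,\dots,H_n\}$ of subgroups of a group $G$ is in general position if for every $1 \le j \le n$, $\bigcap_{i \neq j} H_i \supsetneq \bigcap_{i} H_i$. $\mathrm{MaxDim}(G)$ is the largest cardinality of a collection of maximal subgroups of $G$ in general position. For a subgroup $A \le G$, $\mathrm{MaxDim}(G, A)$ is the largest $k$ such that there exist maximal subgroups $M_1,\dots,M_k$ of $G$ with $\{M_1 \cap A, \dots, M_k \cap A\}$ in general position. If a group $B$ acts on $G$, $\mathrm{MaxDim}_B(G)$ is the largest cardinality of a collection of maximal $B$-invariant (proper) subgroups of $G$ that is in general position. $\Phi(N)$ is the Frattini subgroup of $N$, the intersection of all maximal subgroups of $N$. *)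

(* Defs.v *)
From mathcomp Require Import all_boot all_fingroup all_solvable.
Set Implicit Arguments. Unset Strict Implicit. Unset Printing Implicit Defensive.
Import GroupScope.

(* The ambient A gives the value of the empty intersection. *)
Definition gen_pos (gT : finGroupType) (A : {set gT}) (n : nat)
    (H : 'I_n -> {set gT}) : bool :=
  [forall j : 'I_n,
    (A :&: \bigcap_(i < n) H i) \proper (A :&: \bigcap_(i < n | i != j) H i)].

(* A family in general position in A
   has size <= #|A| <= #|gT|, so the bound #|gT| loses nothing. *)
Definition MaxDimIn (gT : finGroupType) (G A : {set gT}) : nat :=
  \max_(n < #|gT|.+1 |
        [exists f : {ffun 'I_n -> {group gT}},
           [forall i, maximal (f i) G] &&
           gen_pos A (fun i => (f i : {set gT}) :&: A)]) n.

Definition MaxDim (gT : finGroupType) (G : {set gT}) : nat := MaxDimIn G G.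

(* MaxDim_H(N) for H acting on N by conjugation: largest family of maximal
   H-invariant proper subgroups of N in general position (ambient N). *)
Definition MaxDimConj (gT : finGroupType) (H N : {set gT}) : nat :=
  \max_(n < #|gT|.+1 |
        [exists f : {ffun 'I_n -> {group gT}},
           [forall i, maxgroup (f i : {set gT})
              (fun K : {group gT} => (K \proper N) && (H \subset 'N(K)))] &&
           gen_pos N (fun i => (f i : {set gT}))]) n.

(* Main.v *)
Require Import Defs.
From mathcomp Require Import all_boot all_fingroup all_solvable.
Set Implicit Arguments. Unset Strict Implicit. Unset Printing Implicit Defensive.
Import GroupScope.

Lemma gen_posP (gT : finGroupType) (A : {set gT}) n (F : 'I_n -> {set gT}) :
  reflect (forall j, exists x, [/\ x \in A, forall i, i != j -> x \in F i & x \notin F j])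
          (gen_pos A F).
Proof.
apply: (iffP forallP) => H j.
  have /properP [_ [x]] := H j.
  rewrite !inE => /andP[xA /bigcapP xF]; rewrite xA /= => nxF.
  exists x; split => //; apply/negP => xFj; move/negP: nxF; apply; apply/bigcapP => i _.
  by case: (eqVneq i j) => [->//|]; exact: xF.
case: (H j) => x [xA xF nxF]; apply/properP; split.
  apply/subsetP => y; rewrite !inE => /andP[-> /bigcapP yF] /=.
  by apply/bigcapP => i _; exact: yF.
exists x; first by rewrite inE xA; apply/bigcapP.
by rewrite inE xA /=; apply/negP => /bigcapP /(_ j isT); apply/negP.
Qed.

Lemma gen_pos_le (gT : finGroupType) (A : {set gT}) n (F : 'I_n -> {set gT}) :
  gen_pos A F -> n <= #|gT|.
Proof.
move/gen_posP => W.
pose w j := odflt 1 [pick x | (x \notin F j) && [forall i, (i != j) ==> (x \in F i)]].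
have wP j : (w j \notin F j) /\ (forall i, i != j -> w j \in F i).
  rewrite /w; case: pickP => [x /andP[nx /forallP xF] /=|none].
    by split => // i ij; move: (xF i); rewrite ij.
  case: (W j) => x [_ xF nx]; move: (none x); rewrite nx /=.
  by move/negP; case; apply/forallP => i; apply/implyP; exact: xF.
have injw : injective w.
  move=> j j' e; apply/eqP; apply/negPn/negP => jj'.
  have [n1 _] := wP j; have [_ h2] := wP j'.
  by move: n1; rewrite e h2 // eq_sym.
by have := @leq_card _ _ w injw; rewrite card_ord.
Qed.

Lemma MaxDimIn_ge (gT : finGroupType) (G A : {set gT}) n (f : {ffun 'I_n -> {group gT}}) :
  (forall i, maximal (f i) G) -> gen_pos A (fun i => (f i : {set gT}) :&: A) ->
  n <= MaxDimIn G A.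
Proof.
move=> fm fg; have hn : n < #|gT|.+1 by rewrite ltnS; exact: gen_pos_le fg.
rewrite /MaxDimIn; apply: (@leq_bigmax_cond _ _ (fun i : 'I_#|gT|.+1 => val i) (Ordinal hn)).
by apply/existsP; exists f; rewrite fg andbT; apply/forallP.
Qed.

Lemma MaxDimIn_le (gT : finGroupType) (G A : {set gT}) m :
  (forall n (f : {ffun 'I_n -> {group gT}}), (forall i, maximal (f i) G) ->
     gen_pos A (fun i => (f i : {set gT}) :&: A) -> n <= m) ->
  MaxDimIn G A <= m.
Proof.
move=> h; apply/bigmax_leqP => i /existsP [f /andP [/forallP fm fg]].
exact: h fg.
Qed.

Lemma split_l l n (a : 'I_l) : split (lshift n a) = inl a.
Proof. exact: (unsplitK (inl _ a)). Qed.
Lemma split_r l n (b : 'I_n) : split (rshift l b) = inr b.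
Proof. exact: (unsplitK (inr _ b)). Qed.

Lemma part1 (gT : finGroupType) (H N : {group gT}) l (M : 'I_l -> {group gT})
   (R : {set gT}) :
  N <| H -> (forall i, maximal (M i) H) ->
  gen_pos N (fun i => (M i : {set gT}) :&: N) -> R \subset H ->
  (forall x, x \in R -> forall i, x \in M i) ->
  l + MaxDimIn (H / N) (R / N) <= MaxDim H.
Proof.
move=> nNH Mm Mg sRH RM.
have nNH' := normal_norm nNH; have sNH := normal_sub nNH.
suff S : forall n (f : {ffun 'I_n -> {group coset_of N}}), (forall i, maximal (f i) (H / N)) ->
     gen_pos (R / N) (fun i => (f i : {set _}) :&: (R / N)) -> l + n <= MaxDim H.
  have h0 : l <= MaxDim H.
    have := S 0 [ffun i => 1%G]; rewrite addn0; apply; first by case.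
    by apply/forallP; case.
  rewrite -(subnKC h0) leq_add2l; apply: MaxDimIn_le => n f fm fg.
  by rewrite leq_subRL //; exact: S fg.
move=> n f fm fg.
pose g : {ffun 'I_(l + n) -> {group gT}} := [ffun i => match split i with
   inl a => M a | inr b => (coset N @*^-1 (f b))%G end].
have gin i x : (x \in g i) = match split i with inl a => x \in M a
                   | inr b => x \in coset N @*^-1 (f b) end.
  by rewrite ffunE; case: (split i).
have gmax i : maximal (g i) H.
  rewrite ffunE; case: (split i) => [a|b]; first exact: Mm.
  by have := fm b; rewrite -cosetpre_maximal quotientGK.
apply: MaxDimIn_ge gmax _; apply/gen_posP => j.
case: (split_ordP j) => [a ->|b ->].
  have /gen_posP/(_ a) [x [xN xF nx]] := Mg.
  exists x; split; first exact: (subsetP sNH).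
    move=> i ij; rewrite inE (subsetP sNH) // andbT gin.
    case: (split_ordP i) ij => [a' ->|b' ->] ij.
      have: a' != a by apply: contraNneq ij => ->.
      by move/xF; rewrite inE => /andP[].
    exact: (subsetP (sub_cosetpre _)).
  by rewrite inE gin split_l; move: nx; rewrite inE xN andbT; apply: contra => /andP[].
have /gen_posP/(_ b) [y [yR yF ny]] := fg.
case/morphimP: yR => x xnN xR ey.
have xH : x \in H := subsetP sRH x xR.
exists x; split => //.
  move=> i ij; rewrite inE xH andbT gin.
  case: (split_ordP i) ij => [a' ->|b' ->] ij; first exact: RM.
  have: b' != b by apply: contraNneq ij => ->.
  move/yF; rewrite inE => /andP[yf _].
  by apply: mem_morphpre => //; rewrite -ey.
rewrite inE gin split_r xH andbT; apply/negP => /morphpreP [_ hx].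
by move: ny; rewrite inE ey hx (mem_morphim _ xnN xR).
Qed.

Lemma max_cases (gT : finGroupType) (M K H : {group gT}) :
  maximal M H -> M \subset K -> K \subset H -> K :=: M \/ K :=: H.
Proof.
case/maxgroupP => _ mx sMK sKH; case: (eqVneq (K : {set gT}) H) => [->|ne]; first by right.
by left; apply: mx; rewrite // properEneq ne sKH.
Qed.

Lemma Phi_sub_maxN (gT : finGroupType) (H N M : {group gT}) :
  N <| H -> maximal M H -> 'Phi(N) \subset M.
Proof.
move=> nNH mM; apply/negPn/negP => nPM.
have nPH := char_normal_trans (Phi_char N) nNH.
have sMH : M \subset H := proper_sub (maxgroupp mM).
have sNH := normal_sub nNH.
have sPH : 'Phi(N) \subset H := subset_trans (Phi_sub N) sNH.
have nPM' : M \subset 'N('Phi(N)) := subset_trans sMH (normal_norm nPH).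
have [eK|eK] := max_cases (K := (M <*> 'Phi(N))%G) mM (joing_subl _ _)
                   (etrans (join_subG _ _ _) (introT andP (conj sMH sPH))).
  by move: nPM; rewrite -eK joing_subr.
move: eK => /= ; rewrite norm_joinEl // => eK.
have eN : (N :&: M) * 'Phi(N) = N by rewrite group_modr ?Phi_sub // eK; exact/setIidPl.
have nPX : (N :&: M) \subset 'N('Phi(N)).
  exact: subset_trans (subsetIl _ _) (normal_norm (Phi_normal N)).
have : 'Phi(N) <*> (N :&: M)%G = N by rewrite joingC norm_joinEl.
move/Phi_nongen; rewrite genGid => eNM.
move/negP: nPM; apply; apply: subset_trans (Phi_sub N) _; rewrite -eNM; exact: subsetIr.
Qed.

Lemma MN_normal (gT : finGroupType) (H N M : {group gT}) :
  N <| H -> maximal M H -> abelian (N / 'Phi(N)) -> H \subset 'N(M :&: N).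
Proof.
move=> nNH mM ab.
have sPM := Phi_sub_maxN nNH mM.
have sMH : M \subset H := proper_sub (maxgroupp mM).
have nNH' := normal_norm nNH.
have nMN : M :&: N <| N.
  apply: sub_der1_normal (subsetIr _ _).
  apply: subset_trans (der1_min (normal_norm (Phi_normal N)) ab) _.
  by rewrite subsetI sPM Phi_sub.
have sMK : M \subset 'N_H(M :&: N).
  by rewrite subsetI sMH normsI ?normG // (subset_trans sMH nNH').
have [eK|eK] := max_cases mM sMK (subsetIl _ _).
  have sNM : N \subset M.
    by rewrite -eK subsetI (normal_sub nNH) (normal_norm nMN).
  by rewrite (setIidPr sNM).
by rewrite -{1}eK subsetIr.
Qed.

Lemma RN_eq (gT : finGroupType) (H N : {group gT}) k l (M : 'I_k -> {group gT}) (hlk : l <= k) :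
  N <| H -> (forall i, maximal (M i) H) -> abelian (N / 'Phi(N)) ->
  gen_pos N (fun i : 'I_l => (M (widen_ord hlk i) : {set gT}) :&: N) ->
  (H :&: \bigcap_(i < k | i < l) (M i : {set gT})) * N = H.
Proof.
move=> nNH Mm ab Mg.
have sNH := normal_sub nNH; have nNH' := normal_norm nNH.
have sMH i : (M i : {set gT}) \subset H := proper_sub (maxgroupp (Mm i)).
apply/eqP; rewrite eqEsubset mul_subG ?subsetIl //=.
suff S : forall j, j <= l -> H \subset (H :&: \bigcap_(i < k | i < j) (M i : {set gT})) * N.
  exact: S.
elim=> [_|j IH jl].
  apply/subsetP => h hH; rewrite -[h]mulg1; apply: mem_mulg => //.
  by rewrite inE hH; apply/bigcapP.
have jk : j < k := leq_trans jl hlk.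
pose jj : 'I_k := Ordinal jk.
pose Dj := N :&: \bigcap_(i < k | i < j) (M i : {set gT}).
have eD : Dj = N :&: \bigcap_(i < k | i < j) (M i :&: N).
  apply/setP => x; rewrite !inE; apply/andP/andP => [[xN /bigcapP xM]|[xN /bigcapP xM]].
    by split => //; apply/bigcapP => i ij; rewrite inE xM.
  by split => //; apply/bigcapP => i ij; have := xM i ij; rewrite inE => /andP[].
have nDH : H \subset 'N(Dj).
  rewrite eD normsI //; apply: norms_bigcap; apply/bigcapsP => i _.
  exact: MN_normal.
have DjG : group_set Dj by rewrite /Dj groupP.
pose DG := Group DjG.
have nDM : ~~ (Dj \subset M jj).
  have /gen_posP/(_ (Ordinal jl)) [x [xN xF nx]] := Mg.
  apply/negP => /subsetP /(_ x) sD; move: nx; rewrite inE xN andbT.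
  have -> : widen_ord hlk (Ordinal jl) = jj by apply: val_inj.
  apply/negP/negPn; apply: sD; rewrite inE xN; apply/bigcapP => i ij.
  have il := leq_trans ij (ltnW jl).
  have ne : Ordinal il != Ordinal jl.
    by apply/eqP => /(congr1 val) /= e; move: ij; rewrite e ltnn.
  have := xF _ ne; rewrite inE => /andP[xM _].
  by have <- : widen_ord hlk (Ordinal il) = i by apply: val_inj.
have sDH : Dj \subset H by rewrite /Dj subIset ?sNH.
have [eK|eK] := max_cases (K := (M jj <*> DG)%G) (Mm jj) (joing_subl _ _)
                   (etrans (join_subG _ _ _) (introT andP (conj (sMH jj) sDH))).
  by move: nDM; rewrite -eK joing_subr.
move: eK => /=; rewrite norm_joinEl ?(subset_trans (sMH jj)) // => eK.
apply/subsetP => h hH.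
have /mulsgP [r n rR nN ehr] := subsetP (IH (ltnW jl)) h hH.
have rH : r \in H by move: rR; rewrite inE => /andP[].
have := rH; rewrite -{1}eK => /mulsgP [m d mM dD erm].
have dH : d \in H := subsetP sDH d dD.
have mE : m = r * d^-1 by rewrite erm mulgK.
rewrite ehr erm -mulgA; apply: mem_mulg; last first.
  by rewrite groupM //; move: dD; rewrite inE => /andP[].
move: rR dD; rewrite !inE => /andP[_ /bigcapP rM] /andP[_ /bigcapP dM].
rewrite mE groupM ?groupV //=; apply/bigcapP => i; rewrite ltnS leq_eqVlt.
case/orP => [/eqP ei|ij]; last by apply: groupM; [exact: rM | rewrite groupV; exact: dM].
by rewrite -mE; have -> : i = jj by apply: val_inj.
Qed.

Lemma part3 (gT : finGroupType) (H N : {group gT}) l (M : 'I_l -> {group gT}) :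
  N <| H -> (forall i, maximal (M i) H) -> abelian (N / 'Phi(N)) ->
  gen_pos N (fun i => (M i : {set gT}) :&: N) -> l <= MaxDimConj H N.
Proof.
move=> nNH Mm ab Mg.
have hl : l < #|gT|.+1 by rewrite ltnS; exact: gen_pos_le Mg.
rewrite /MaxDimConj; apply: (@leq_bigmax_cond _ _ (fun i : 'I_#|gT|.+1 => val i) (Ordinal hl)).
apply/existsP; exists [ffun i => (M i :&: N)%G]; apply/andP; split.
  apply/forallP => i; rewrite ffunE /=.
  have /gen_posP/(_ i) [x [xN _ nx]] := Mg.
  have nMH := MN_normal nNH (Mm i) ab.
  have sMH : (M i : {set gT}) \subset H := proper_sub (maxgroupp (Mm i)).
  apply/maxgroupP; split.
    rewrite nMH andbT properE subsetIr /=; apply/negP => /subsetP /(_ x xN).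
    by move/negP: nx.
  move=> K /andP[pKN nKH] sMK.
  have nKM : (M i : {set gT}) \subset 'N(K) := subset_trans sMH nKH.
  have sKN := proper_sub pKN.
  have sKM : K \subset M i.
    apply/negPn/negP => nKM'.
    have [eK|eK] := max_cases (K := (M i <*> K)%G) (Mm i) (joing_subl _ _)
      (etrans (join_subG _ _ _) (introT andP (conj sMH (subset_trans sKN (normal_sub nNH))))).
      by move: nKM'; rewrite -eK joing_subr.
    move: eK => /=; rewrite norm_joinEl // => eK.
    have : N \subset K.
      have e : (N :&: M i) * K = N by rewrite group_modr // eK; exact/setIidPl/normal_sub.
      rewrite -e mul_subG //; apply: subset_trans sMK; by rewrite setIC.
    by move=> sNK; move: pKN; rewrite properE sNK andbF.
  by apply/eqP; rewrite eqEsubset sMK subsetI sKM sKN.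
apply/gen_posP => j; have /gen_posP/(_ j) [x [xN xF nx]] := Mg.
by exists x; split => // [i ij|]; rewrite ffunE //; exact: xF.
Qed.

Theorem proposition3p3 (gT : finGroupType) (H N : {group gT}) (k l : nat)
    (M : 'I_k -> {group gT}) (hlk : l <= k) :
  N <| H ->
  (forall i, maximal (M i) H) ->
  gen_pos H (fun i => (M i : {set gT})) ->
  gen_pos N (fun i : 'I_l => (M (widen_ord hlk i) : {set gT}) :&: N) ->
  (forall j : 'I_k, l <= j ->
     N :&: \bigcap_(i < k | i < l) (M i : {set gT}) \subset M j) ->
  let R := H :&: \bigcap_(i < k | i < l) (M i : {set gT}) in
  l + MaxDimIn (H / N) (R / N) <= MaxDim H /\
  (abelian (N / 'Phi(N)) ->
     l + MaxDim (H / N) <= MaxDim H /\ l <= MaxDimConj H N).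
Proof.
move=> nNH Mm _ Mg _ R.
have P1 : l + MaxDimIn (H / N) (R / N) <= MaxDim H.
  apply: (part1 (M := fun i => M (widen_ord hlk i))) => //.
    by rewrite /R subsetIl.
  move=> x; rewrite /R inE => /andP[_ /bigcapP xM] i; exact: (xM (widen_ord hlk i) (ltn_ord i)).
split => // ab; split; last exact: (part3 (M := fun i => M (widen_ord hlk i))).
have e : R / N = H / N by rewrite -quotientMidr /R (RN_eq (hlk := hlk)).
by move: P1; rewrite e.
Qed.
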